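(* Let $m,d\geq1$ and let $\mathcal{A}\in\mathbb{T}_{2m,d}$ be Einstein-symmetric. If Z-eigenvalues of $\mathcal{A}$ exist, then $\lambda^E_{\max}(\mathcal{A})\geq\lambda^Z_{\max}(\mathcal{A})$.
   Context: $\mathbb{T}_{2m,d}$ is the set of real tensors $\mathcal{A}=(a_{i_1\ldots i_{2m}})$ of order $2m$ with every index in $\{1,\ldots,d\}$. The Einstein product of $\mathcal{A},\mathcal{B}\in\mathbb{T}_{2m,d}$ is $(\mathcal{A}*\mathcal{B})_{i_1\ldots i_mj_1\ldots j_m}=\sum_{k_1,\ldots,k_m}a_{i_1\ldots i_mk_1\ldots k_m}b_{k_1\ldots k_mj_1\ldots j_m}$. Transpose: $(\mathcal{A}^\top)_{i_1\ldots i_mj_1\ldots j_m}=a_{j_1\ldots j_mi_1\ldots i_m}$; Einstein-symmetric means $\mathcal{A}^\top=\mathcal{A}$. Diagonal means $a_{i_1\ldots i_mj_1\ldots j_m}=0$ unless $i_k=j_k$ for all $k$; $\mathcal{I}^E$ is diagonal with all entries $a_{i_1\ldots i_mi_1\ldots i_m}=1$; $\mathcal{U}$ is Einstein-orthogonal if $\mathcal{U}^\top*\mathcal{U}=\mathcal{I}^E$. An Einstein-symmetric $\mathcal{A}$ has a decomposition $\mathcal{A}=\mathcal{U}*\mathcal{D}*\mathcal{U}^\top$ with $\mathcal{U}$ Einstein-orthogonal and $\mathcal{D}$ Einstein-symmetric diagonal; the diagonal entries $d_{i_1\ldots i_mi_1\ldots i_m}$ of $\mathcal{D}$ are the Einstein-eigenvalues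 of $\mathcal{A}$ (equivalently, the eigenvalues of the $d^m\times d^m$ matrix $f(\mathcal{A})_{ij}=a_{i_1\ldots i_mj_1\ldots j_m}$, $i=i_1+\sum_{k=2}^m(i_k-1)d^{k-1}$, $j$ likewise), and $\lambda^E_{\max}(\mathcal{A})$ is the largest of them. A real $\lambda$ is a Z-eigenvalue of $\mathcal{A}$ if there is $x\in\mathbb{R}^d$ with $x^\top x=1$ and $\mathcal{A}x^{2m-1}=\lambda x$, where $(\mathcal{A}x^{2m-1})_i=\sum_{i_2,\ldots,i_{2m}}a_{ii_2\ldots i_{2m}}x_{i_2}\cdots x_{i_{2m}}$; $\lambda^Z_{\max}(\mathcal{A})$ is the largest Z-eigenvalue. *)

(* Defs.v *)
From HB Require Import structures.
From mathcomp Require Import all_boot all_order all_algebra.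
Set Implicit Arguments. Unset Strict Implicit. Unset Printing Implicit Defensive.
Import Order.TTheory GRing.Theory Num.Theory.
Local Open Scope ring_scope.

(* A multi-index (i_1,...,i_m) with each i_k in {1..d} (here 'I_d = {0..d-1}). *)
Definition midx (m d : nat) := {ffun 'I_m -> 'I_d}.

(* A tensor of order 2m in T_{2m,d}: entry a_{i_1..i_m j_1..j_m} = A I J
   with I = (i_1..i_m), J = (j_1..j_m). *)
Definition tensor (R : Type) (m d : nat) := midx m d -> midx m d -> R.

Section Tensors.
Variables (R : rcfType) (m d : nat).

Definition eprod (A B : tensor R m d) : tensor R m d :=
  fun I J => \sum_(K : midx m d) A I K * B K J.

Definition etr (A : tensor R m d) : tensor R m d := fun I J => A J I.

Definition Esym (A : tensor R m d) : Prop := forall I J, etr A I J = A I J.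

Definition Ediag (A : tensor R m d) : Prop := forall I J, I != J -> A I J = 0.

Definition idE : tensor R m d := fun I J => (I == J)%:R.

Definition Eorth (U : tensor R m d) : Prop :=
  forall I J, eprod (etr U) U I J = idE I J.

Definition Eeig (A : tensor R m d) (lam : R) : Prop :=
  exists U D : tensor R m d,
    [/\ Eorth U, Esym D, Ediag D,
        (forall I J, A I J = eprod (eprod U D) (etr U) I J)
      & exists I, D I I = lam].

(* (A x^{2m-1})_i = sum_{i_2..i_{2m}} a_{i i_2 .. i_{2m}} x_{i_2} ... x_{i_{2m}},
   where the first index is i_1 = I (Ordinal hm) (needs m >= 1). *)
Definition Zapply (hm : (0 < m)%N) (A : tensor R m d) (x : 'I_d -> R) (i : 'I_d) : R :=
  \sum_(I : midx m d | I (Ordinal hm) == i) \sum_(J : midx m d)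
     A I J * (\prod_(k : 'I_m | k != Ordinal hm) x (I k)) * (\prod_(k : 'I_m) x (J k)).

Definition Zeig (hm : (0 < m)%N) (A : tensor R m d) (lam : R) : Prop :=
  exists x : 'I_d -> R,
    \sum_(i : 'I_d) x i ^+ 2 = 1 /\ forall i, Zapply hm A x i = lam * x i.

End Tensors.

(* Main.v *)
Require Import Defs.
From HB Require Import structures.
From mathcomp Require Import all_boot all_order all_algebra.
Import Order.TTheory GRing.Theory Num.Theory.
Local Open Scope ring_scope.
From mathcomp Require Import complex.
From mathcomp Require Import ring lra.

Section Aux.
Variable R : rcfType.
Lemma ReD (x y : R[i]) : Re (x + y) = Re x + Re y. Proof. by move: x y => [a b] [c d]. Qed.
Lemma ImD (x y : R[i]) : Im (x + y) = Im x + Im y. Proof. by move: x y => [a b] [c d]. Qed.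
Lemma ReMul (x y : R[i]) : Re (x * y) = Re x * Re y - Im x * Im y.
Proof. by move: x y => [a b] [c d]. Qed.
Lemma ImMul (x y : R[i]) : Im (x * y) = Re x * Im y + Im x * Re y.
Proof. by move: x y => [a b] [c d]. Qed.
Lemma ReM (x : R[i]) (k : R) : Re (x * (k%:C)%C) = Re x * k.
Proof. by case: x => a b /=; rewrite mulr0 subr0. Qed.
Lemma ImM (x : R[i]) (k : R) : Im (x * (k%:C)%C) = Im x * k.
Proof. by case: x => a b /=; rewrite mulr0 add0r. Qed.

Lemma mul_self_ge0 (x : R) : 0 <= x * x. Proof. by rewrite -expr2 sqr_ge0. Qed.

Lemma sqnorm_eq0 n (p : 'rV[R]_n) : (p *m p^T) 0 0 = 0 -> p = 0.
Proof.
rewrite mxE => h; apply/rowP => i; rewrite mxE.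
rewrite (eq_bigr (fun j => p 0 j * p 0 j)) in h; last by move=> j _; rewrite mxE.
have := psumr_eq0P (P := xpredT) (fun j _ => mul_self_ge0 (p 0 j)) h (i := i) isT.
by move=> /eqP; rewrite mulf_eq0 orbb => /eqP.
Qed.

Lemma sqnorm_ge0 n (p : 'rV[R]_n) : 0 <= (p *m p^T) 0 0.
Proof. rewrite mxE; apply: sumr_ge0 => j _; rewrite mxE; exact: mul_self_ge0. Qed.

Lemma real_eigvec n (S : 'M[R]_n.+1) : S^T = S ->
  exists lam, exists2 v : 'rV[R]_n.+1, v != 0 & v *m S = lam *: v.
Proof.
move=> sS.
pose Sc := map_mx (real_complex R) S.
have [a ra] : exists a, root (char_poly Sc) a.
  by apply/closed_rootP; rewrite size_char_poly.
move: ra; rewrite -eigenvalue_root_char => /eigenvalueP [v vS v0].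
pose p := map_mx (@Re R) v. pose q := map_mx (@Im R) v.
have eS j : \sum_i v 0 i * (S i j)%:C%C = a * v 0 j.
  by move/rowP: vS => /(_ j); rewrite !mxE => <-; apply: eq_bigr => i _; rewrite mxE.
have hp : p *m S = Re a *: p - Im a *: q.
  apply/rowP => j; rewrite !mxE.
  have := congr1 (@Re R) (eS j); rewrite (big_morph _ (@ReD) (erefl : Re (0 : R[i]) = 0)).
  rewrite ReMul => <-; apply: eq_bigr => i _; rewrite !mxE ReM //.
have hq : q *m S = Im a *: p + Re a *: q.
  apply/rowP => j; rewrite !mxE.
  have := congr1 (@Im R) (eS j); rewrite (big_morph _ (@ImD) (erefl : Im (0 : R[i]) = 0)).
  rewrite ImMul addrC => <-; apply: eq_bigr => i _; rewrite !mxE ImM //.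
have e1 : p *m S *m q^T = (q *m S *m p^T)^T by rewrite !trmx_mul trmxK sS mulmxA.
rewrite hp hq mulmxBl mulmxDl -!scalemxAl in e1. rewrite raddfD /= !linearZ /= !trmx_mul !trmxK in e1.
rewrite [RHS]addrC in e1; move/addrI: e1 => e1.
have eb : Im a *: (p *m p^T + q *m q^T) = 0.
  by rewrite scalerDr -e1 scalerN addNr.
have eb2 : Im a * ((p *m p^T) 0 0 + (q *m q^T) 0 0) = 0.
  move/matrixP: eb => /(_ 0 0). by rewrite [LHS]mxE [X in _ * X = _]mxE [X in _ = X]mxE.
have vpq : v != 0 -> p != 0 \/ q != 0.
  case: (eqVneq p 0) => [p0|]; last by left.
  case: (eqVneq q 0) => [q0|]; last by right.
  move=> /negP vn0; exfalso; apply: vn0; apply/eqP/rowP => j; move/rowP: p0 => /(_ j); move/rowP: q0 => /(_ j).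
  rewrite !mxE; case: (v 0 j) => x y /= -> -> //.
have ima : Im a = 0.
  move: eb2 => /eqP; rewrite mulf_eq0 => /orP [/eqP //|].
  case: (vpq v0) => [/eqP hp0|/eqP hq0].
  - rewrite paddr_eq0 ?sqnorm_ge0 // => /andP [/eqP /sqnorm_eq0 //].
  - rewrite paddr_eq0 ?sqnorm_ge0 // => /andP [_ /eqP /sqnorm_eq0 //].
rewrite ima scale0r ?subr0 ?add0r in hp hq.
exists (Re a); case: (vpq v0) => [hp0|hq0]; [exists p | exists q] => //.
by rewrite hq scale0r add0r.
Qed.
Lemma mxB m n (A B : 'M[R]_(m,n)) i j : (A - B) i j = A i j - B i j.
Proof. by rewrite !mxE. Qed.
Lemma mxD m n (A B : 'M[R]_(m,n)) i j : (A + B) i j = A i j + B i j.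
Proof. by rewrite !mxE. Qed.
Lemma mxZ m n (A : 'M[R]_(m,n)) a i j : (a *: A) i j = a * A i j.
Proof. by rewrite !mxE. Qed.

Lemma householder n (v : 'rV[R]_n.+1) : (v *m v^T) 0 0 = 1 ->
  exists H : 'M[R]_n.+1, H^T *m H = 1%:M /\ row 0 H = v.
Proof.
move=> vv.
pose e : 'rV[R]_n.+1 := delta_mx 0 0.
have re : row 0 (1%:M : 'M[R]_n.+1) = e by rewrite rowE mulmx1.
pose w := v - e.
case: (eqVneq w 0) => [w0|wn0].
  exists 1%:M; rewrite trmx1 mulmx1 re; split => //.
  by apply/eqP; rewrite eq_sym -subr_eq0 -/w w0.
pose c := (w *m w^T) 0 0.
have cpos : 0 < c.
  rewrite lt_def sqnorm_ge0 andbT; apply/eqP => /sqnorm_eq0 h.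
  by rewrite h eqxx in wn0.
have ee : (e *m e^T) 0 0 = 1.
  by rewrite mxE (bigD1 0) //= big1 ?addr0 => [|j /negbTE jn]; rewrite !mxE ?eqxx ?jn ?mulr1 ?mul0r.
have ve : (v *m e^T) 0 0 = v 0 0.
  rewrite mxE (bigD1 0) //= big1 ?addr0 => [|j /negbTE jn]; rewrite !mxE ?eqxx ?jn ?mulr1 ?mulr0 //.
have ev : (e *m v^T) 0 0 = v 0 0.
  rewrite mxE (bigD1 0) //= big1 ?addr0 => [|j /negbTE jn]; rewrite !mxE ?eqxx ?jn ?mul1r ?mul0r //.
have cE : c = 2 - 2 * v 0 0.
  rewrite /c /w [(v - e)^T]raddfB /= mulmxBl !mulmxBr !mxB vv ee ve ev.
  ring.
pose X := w^T *m w.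
have XX : X *m X = c *: X.
  by rewrite /X mulmxA -(mulmxA w^T) [w *m w^T]mx11_scalar -/c mul_mx_scalar -scalemxAl.
pose k := 2 / c.
exists (1%:M - k *: X).
have XT : X^T = X by rewrite /X trmx_mul trmxK.
split.
  have HT : (1%:M - k *: X)^T = 1%:M - k *: X.
    by rewrite [LHS]raddfB /= trmx1 [X in _ - X]linearZ /= XT.
  rewrite HT mulmxBl !mulmxBr mul1mx mulmx1 -scalemxAl -scalemxAr.
  rewrite mul1mx -scalemxAr XX !scalerA.
  have kc : k * k * c = k + k by rewrite /k -mulrA divfK ?gt_eqF // mulr_natr mulr2n.
  by rewrite kc scalerDl opprB addrK subrK.
rewrite rowE mulmxBr -/e -rowE re -scalemxAr /X mulmxA [e *m w^T]mx11_scalar.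
have ew : (e *m w^T) 0 0 = - (c / 2).
  rewrite cE /w [(v - e)^T]raddfB /= mulmxBr mxB ee ev. 
  by field.
rewrite ew mul_scalar_mx scalerA /k.
have -> : 2 / c * - (c / 2) = -1 by field; rewrite ?gt_eqF.
by rewrite scaleN1r opprK addrC subrK.
Qed.

Lemma spectral n (S : 'M[R]_n) : S^T = S ->
  exists U : 'M[R]_n, exists D : 'rV[R]_n,
    U^T *m U = 1%:M /\ S = U *m diag_mx D *m U^T.
Proof.
elim: n S => [|n IH] S sS.
  exists 1%:M, 0; split; first by rewrite trmx1 mulmx1.
  by apply/matrixP => -[].
have [lam [v v0 vS]] := real_eigvec _ _ sS.
pose c := (v *m v^T) 0 0.
have cpos : 0 < c.
  rewrite lt_def sqnorm_ge0 andbT; apply/eqP => /sqnorm_eq0 h.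
  by rewrite h eqxx in v0.
pose v' := (Num.sqrt c)^-1 *: v.
have v'v' : (v' *m v'^T) 0 0 = 1.
  rewrite /v' linearZ /= -scalemxAl -scalemxAr !mxZ -/c mulrA -expr2 exprVn sqr_sqrtr ?ltW //.
  by rewrite mulVf ?gt_eqF.
have v'S : v' *m S = lam *: v' by rewrite -scalemxAl vS !scalerA mulrC.
have [H [HH rH]] := householder _ _ v'v'.
have HH' : H *m H^T = 1%:M := mulmx1C HH.
pose B : 'M[R]_(1 + n) := H *m S *m H^T.
have rB : row 0 B = lam *: row 0 (1%:M : 'M[R]_n.+1).
  by rewrite /B rowE !mulmxA -rowE rH v'S -scalemxAl -rH rowE -mulmxA HH' -rowE.
have sB : B^T = B by rewrite /B !trmx_mul trmxK sS mulmxA.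
have SB : S = H^T *m B *m H.
  by rewrite /B !mulmxA HH mul1mx -!mulmxA HH mulmx1.
clearbody B.
have Bentry i j : val i = 0%N -> B i j = lam * (val j == 0%N)%:R.
  move=> i0; have -> : i = 0 by apply/val_inj.
  move/rowP: rB => /(_ j); rewrite !mxE => ->.
  by congr (_ * _%:R); rewrite eq_sym.
have ul : ulsubmx B = lam%:M.
  apply/matrixP => i j; rewrite !mxE (ord1 i) (ord1 j) Bentry //= mulr1 //.
have ur : ursubmx B = 0.
  apply/matrixP => i j; rewrite !mxE (ord1 i) Bentry //= mulr0 //.
have dl : dlsubmx B = 0.
  apply/matrixP => i j; move/matrixP: sB => /(_ (rshift 1 i) (lshift n j)).
  rewrite !mxE (ord1 j) => <-; rewrite Bentry //= mulr0 //.
have sS' : (drsubmx B)^T = drsubmx B by rewrite trmx_drsub sB.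
have [U' [D' [UU' eS']]] := IH _ sS'.
exists (H^T *m block_mx (1%:M : 'M[R]_1) 0 0 U'), (row_mx (lam%:M : 'rV[R]_1) D'); split.
  have BkO : (block_mx (1%:M:'M[R]_1) 0 0 U')^T *m block_mx (1%:M:'M[R]_1) 0 0 U' = 1%:M :> 'M[R]_(1+n).
    rewrite tr_block_mx !trmx0 trmx1 mulmx_block !mulmx0 !mul0mx !mulmx1 !addr0 !add0r UU'.
    by rewrite -scalar_mx_block.
  rewrite trmx_mul trmxK -mulmxA (mulmxA H) HH' mul1mx.
  exact: BkO.
have Bdec : B = block_mx (1%:M:'M[R]_1) 0 0 U' *m diag_mx (row_mx (lam%:M : 'rV[R]_1) D')
     *m (block_mx (1%:M:'M[R]_1) 0 0 U')^T.
  rewrite -[B]submxK ul ur dl eS' diag_mx_row tr_block_mx !trmx0 trmx1.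
  have -> : diag_mx (lam%:M : 'rV[R]_1) = lam%:M.
    by apply/matrixP => i j; rewrite !mxE (ord1 i) (ord1 j).
  rewrite !mulmx_block !mulmx0 !mul0mx !mulmx1 !mul1mx !addr0 !add0r.
  by rewrite mul0mx.
by rewrite SB Bdec trmx_mul trmxK !mulmxA.
Qed.
End Aux.

Lemma sumT (R : rcfType) (T : finType) (F : T -> R) :
  \sum_(K : T) F K = \sum_(k < #|T|) F (enum_val k).
Proof.
rewrite (reindex (fun k : 'I_#|T| => enum_val k)) //; exists enum_rank => y _; first exact: enum_valK.
exact: enum_rankK.
Qed.

Theorem lemma2p4 (R : rcfType) (m d : nat) (hm : (0 < m)%N) (hd : (0 < d)%N)
    (A : tensor R m d) :
  Esym A ->
  (exists mu, Zeig hm A mu) ->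
  forall mu : R, Zeig hm A mu -> exists lam : R, Eeig A lam /\ mu <= lam.
Proof.
move=> sA _ mu [x [xn xe]].
pose T := midx m d.
pose M : 'M[R]_#|T| := \matrix_(i, j) A (enum_val i) (enum_val j).
have sM : M^T = M by apply/matrixP => i j; rewrite !mxE; exact: sA.
have [U0 [D0 [UU eM]]] := spectral _ _ _ sM.
have UU' : U0 *m U0^T = 1%:M := mulmx1C UU.
pose P (I : T) := \prod_(t < m) x (I t).
pose X : 'rV[R]_#|T| := \row_k P (enum_val k).
have XX : (X *m X^T) 0 0 = 1.
  rewrite mxE; transitivity (\sum_(I : T) P I * P I).
    by rewrite [RHS]sumT; apply: eq_bigr => k _; rewrite !mxE.
  have h1 : \prod_(t < m) \sum_(i < d) x i * x i = 1.
    rewrite (eq_bigr (fun _ => 1)) => [|t _]; first by rewrite big1_eq.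
    by rewrite -xn; apply: eq_bigr => i _; rewrite expr2.
  rewrite -h1 bigA_distr_bigA /=; apply: eq_bigr => I _.
  by rewrite /P -big_split.
have XMX : (X *m M *m X^T) 0 0 = mu.
  have Z : \sum_i x i * Zapply hm A x i = mu.
    rewrite (eq_bigr (fun i => mu * (x i * x i))) => [|i _]; last by rewrite xe mulrCA.
    by rewrite -mulr_sumr -[RHS]mulr1 -xn; congr (_ * _); apply: eq_bigr => i _; rewrite expr2.
  rewrite -Z.
  transitivity (\sum_(I : T) \sum_(J : T) P I * A I J * P J).
    rewrite mxE; under eq_bigr do rewrite mxE mulr_suml.
    rewrite exchange_big /= [RHS]sumT; apply: eq_bigr => i _.
    rewrite [RHS]sumT; apply: eq_bigr => j _; rewrite !mxE //.
  rewrite /Zapply; under [RHS]eq_bigr do rewrite mulr_sumr.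
  rewrite [LHS](partition_big (fun I : T => I (Ordinal hm)) xpredT) //=.
  apply: eq_bigr => i _; apply: eq_big => [I|I /eqP <-] //.
  rewrite mulr_sumr; apply: eq_bigr => J _; rewrite /P (bigD1 (Ordinal hm)) //=.
  ring.
pose Y := X *m U0.
have YY : (Y *m Y^T) 0 0 = 1.
  by rewrite /Y trmx_mul mulmxA -(mulmxA X) UU' mulmx1.
have YD : mu = \sum_k D0 0 k * (Y 0 k * Y 0 k).
  rewrite -XMX eM /Y !mulmxA -mulmxA -trmx_mul mul_mx_diag mxE.
  by apply: eq_bigr => k _; rewrite !mxE; ring.
have k0 : 'I_#|T|.
  apply: (@enum_rank T); exact: [ffun => Ordinal hd].
case: (@arg_maxP _ _ _ k0 xpredT (fun k => D0 0 k) isT) => k _ Hk.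
exists (D0 0 k); split.
  exists (fun I J => U0 (enum_rank I) (enum_rank J)),
         (fun I J => (I == J)%:R * D0 0 (enum_rank I)); split.
  - move=> I J; rewrite /eprod /etr /idE sumT.
    transitivity ((U0^T *m U0) (enum_rank I) (enum_rank J)).
      by rewrite mxE; apply: eq_bigr => l _; rewrite !mxE enum_valK.
    by rewrite UU mxE (inj_eq enum_rank_inj).
  - move=> I J; rewrite /etr eq_sym; case: eqP => [->|] //; by rewrite !mul0r.
  - by move=> I J /negbTE ->; rewrite mul0r.
  - move=> I J; rewrite /eprod /etr.
    transitivity (\sum_(L : T) U0 (enum_rank I) (enum_rank L) * D0 0 (enum_rank L)
                      * U0 (enum_rank J) (enum_rank L)).
      rewrite sumT.
      have -> : A I J = M (enum_rank I) (enum_rank J) by rewrite mxE !enum_rankK.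
      rewrite eM mxE; apply: eq_bigr => l _; rewrite mul_mx_diag !mxE enum_valK //.
    apply: eq_bigr => L _; congr (_ * _).
    rewrite (bigD1 L) //= eqxx mul1r big1 ?addr0 // => K /negbTE ->.
    by rewrite mul0r mulr0.
  - by exists (enum_val k); rewrite eqxx mul1r enum_valK.
rewrite YD -[X in _ <= X]mulr1 -YY mxE mulr_sumr; apply: ler_sum => j _.
rewrite !mxE ler_wpM2r ?mul_self_ge0 //; exact: Hk.
Qed.
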